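(* Let $L'>0$ and let $\{|\tilde\psi(l)\rangle\}_{l\in[0,L']}$ be a continuous path of normalized pure states in a finite-dimensional Hilbert space. Assume there is a fixed $d\ge 0$ such that for all $l$ and all $\delta$ with $l,l+\delta\in[0,L']$, $$|\langle\tilde\psi(l)|\tilde\psi(l+\delta)\rangle|^2\ \ge\ 1-d^2\delta^2 .$$ Let $0<p<1$. Then the state $|\tilde\psi(L')\rangle$ can be prepared from $|\tilde\psi(0)\rangle$ with fidelity at least $p$ by $q=\lceil (L')^2d^2/(1-p)\rceil$ intermediate projective-measurement operations: there are points $0<l_1<\dots<l_q=L'$ such that, for any choice of projective-measurement operations $M_{l_j}$ onto $|\tilde\psi(l_j)\rangle$ (i.e. for any choice of the quantum operations $\mathcal E$ in their definition), the state $\rho_{\rm out}=M_{l_q}\circ\cdots\circ M_{l_1}(|\tilde\psi(0)\rangle\langle\tilde\psi(0)|)$ satisfies $\langle\tilde\psi(L')|\rho_{\rm out}|\tilde\psi(L')\rangle\ge p$.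
   Context: For a normalized state $|\tilde\psi(l)\rangle$ let $P_l=|\tilde\psi(l)\rangle\langle\tilde\psi(l)|$. A projective-measurement operation onto $|\tilde\psi(l)\rangle$ is a quantum operation (completely positive trace-preserving map) of the form $M_l(\rho)=P_l\rho P_l+\mathcal E\big((\mathbb 1-P_l)\rho(\mathbb 1-P_l)\big)$, where $\mathcal E$ is an arbitrary quantum operation (which may depend on $l$). *)

(* Defs.v *)
From HB Require Import structures.
From mathcomp Require Import all_boot all_order all_algebra.
From mathcomp Require Import reals.
From mathcomp Require Import complex.
Set Implicit Arguments. Unset Strict Implicit. Unset Printing Implicit Defensive.
Import Order.TTheory GRing.Theory Num.Theory.
Local Open Scope ring_scope.

Section QDefs.
Variables (R : realType) (n : nat).
Local Notation C := (R[i]).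

Definition cR (x : R) : C := Complex x 0.

Definition adjmx (m k : nat) (A : 'M[C]_(m, k)) : 'M[C]_(k, m) :=
  (map_mx Num.conj A)^T.

Definition cdot (u v : 'cV[C]_n) : C := (adjmx u *m v) 0 0.

Definition proj (u : 'cV[C]_n) : 'M[C]_n := u *m adjmx u.

(* A family of k x k blocks (each an n x n matrix), i.e. an operator on
   C^k (x) C^n, is positive semidefinite *)
Definition psd_block (k : nat) (X : 'I_k -> 'I_k -> 'M[C]_n) : Prop :=
  forall v : 'I_k -> 'cV[C]_n,
    0 <= \sum_(a < k) \sum_(b < k) (adjmx (v a) *m X a b *m v b) 0 0.

(* Complete positivity: id_k (x) E maps PSD operators
   on C^k (x) C^n (written as k x k block matrices) to PSD operators,
   for every k. *)
Definition quantum_operation (E : 'M[C]_n -> 'M[C]_n) : Prop :=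
  [/\ (forall (a : C) (X Y : 'M[C]_n), E (a *: X + Y) = a *: E X + E Y),
      (forall k (X : 'I_k -> 'I_k -> 'M[C]_n),
          psd_block X -> psd_block (fun a b => E (X a b)))
    & (forall X : 'M[C]_n, \tr (E X) = \tr X)].

Definition proj_meas (u : 'cV[C]_n) (E : 'M[C]_n -> 'M[C]_n) (rho : 'M[C]_n)
  : 'M[C]_n :=
  let P := proj u in
  P *m rho *m P + E ((1%:M - P) *m rho *m (1%:M - P)).

Definition sqnorm (u : 'cV[C]_n) : C := cdot u u.

End QDefs.

(* Main.v *)
Require Import Defs.
From HB Require Import structures.
From mathcomp Require Import all_boot all_order all_algebra.
From mathcomp Require Import reals.
From mathcomp Require Import complex.
From mathcomp Require Import ring lra.
Import Order.TTheory GRing.Theory Num.Theory.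
Local Open Scope ring_scope.

Section H.
Variables (R : realType) (n : nat).
Local Notation C := R[i].

Lemma conjK' (x : C) : Num.conj (Num.conj x) = x.
Proof. exact: conjcK. Qed.

Lemma adjmxM m k l (A : 'M[C]_(m,k)) (B : 'M[C]_(k,l)) :
  adjmx (A *m B) = adjmx B *m adjmx A.
Proof. by rewrite /adjmx map_mxM trmx_mul. Qed.

Lemma adjmxB m k (A B : 'M[C]_(m,k)) : adjmx (A - B) = adjmx A - adjmx B.
Proof. by apply/matrixP=> i j; rewrite !mxE rmorphB. Qed.

Lemma adjmx1 : adjmx (1%:M : 'M[C]_n) = 1%:M.
Proof. by apply/matrixP=> i j; rewrite !mxE rmorph_nat eq_sym. Qed.

Lemma adjmx_proj (u : 'cV[C]_n) : adjmx (proj u) = proj u.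
Proof.
rewrite /proj adjmxM; congr (_ *m _).
apply/matrixP=> i j; rewrite !mxE; exact: conjcK.
Qed.

Lemma mx11_mul (A B : 'M[C]_1) : (A *m B) 0 0 = A 0 0 * B 0 0.
Proof. by rewrite !mxE big_ord1. Qed.

Lemma cdot_conj (u w : 'cV[C]_n) : cdot u w = Num.conj (cdot w u).
Proof.
rewrite /cdot !mxE rmorph_sum; apply: eq_bigr => k _.
by rewrite !mxE rmorphM /= conjCK mulrC.
Qed.

Definition psd (X : 'M[C]_n) := forall v : 'cV[C]_n, 0 <= (adjmx v *m X *m v) 0 0.

Lemma psd0 : psd 0.
Proof. by move=> v; rewrite mulmx0 mul0mx mxE. Qed.

Lemma psdD X Y : psd X -> psd Y -> psd (X + Y).
Proof.
move=> hX hY v; rewrite mulmxDr mulmxDl mxE; exact: addr_ge0.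
Qed.

Lemma psdZ (c : C) X : 0 <= c -> psd X -> psd (c *: X).
Proof.
move=> hc hX v; rewrite -scalemxAr -scalemxAl mxE; exact: mulr_ge0.
Qed.

Lemma psd_conj (A X : 'M[C]_n) : psd X -> psd (adjmx A *m X *m A).
Proof.
move=> hX v.
have -> : adjmx v *m (adjmx A *m X *m A) *m v = adjmx (A *m v) *m X *m (A *m v).
  by rewrite adjmxM !mulmxA.
exact: hX.
Qed.

Lemma psdE E X : quantum_operation E -> psd X -> psd (E X).
Proof.
case=> _ hcp _ hX v.
have := hcp 1%N (fun _ _ => X) _ (fun _ => v).
rewrite !big_ord1; apply => w; rewrite !big_ord1; exact: hX.
Qed.

Lemma cdot_normsq (z : C) : 0 <= z * Num.conj z.
Proof. by rewrite -normCK exprn_ge0. Qed.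

Lemma proj_quad (v u : 'cV[C]_n) :
  (adjmx v *m proj u *m v) 0 0 = cdot v u * cdot u v.
Proof. by rewrite /proj /cdot mulmxA -mulmxA mx11_mul. Qed.

Lemma psd_proj u : psd (proj u).
Proof.
move=> v; rewrite proj_quad [cdot v u]cdot_conj mulrC; exact: cdot_normsq.
Qed.

Lemma proj3 (u w : 'cV[C]_n) :
  proj u *m proj w *m proj u = (cdot w u * cdot u w) *: proj u.
Proof.
rewrite /proj.
have -> : u *m adjmx u *m (w *m adjmx w) *m (u *m adjmx u)
   = u *m (adjmx u *m w) *m (adjmx w *m u) *m adjmx u by rewrite !mulmxA.
rewrite [adjmx u *m w]mx11_scalar [adjmx w *m u]mx11_scalar.
rewrite !mul_mx_scalar -!scalemxAl scalerA.
done.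
Qed.

Lemma step (u w : 'cV[C]_n) rho (c b : C) E :
  quantum_operation E -> 0 <= c ->
  psd (rho - c *: proj w) -> b <= `|cdot w u| ^+ 2 ->
  psd (proj_meas u E rho - (c * b) *: proj u).
Proof.
move=> hE hc hX hb.
have hr : psd rho.
  have -> : rho = (rho - c *: proj w) + c *: proj w by rewrite subrK.
  by apply: psdD => //; apply: psdZ => //; exact: psd_proj.
set P := proj u.
have eq1 : proj_meas u E rho - (c * b) *: P =
   (adjmx P *m (rho - c *: proj w) *m P + (c * (`|cdot w u| ^+ 2 - b)) *: P)
   + E (adjmx (1%:M - P) *m rho *m (1%:M - P)).
  have h3 : P *m (rho - c *: proj w) *m P
      = P *m rho *m P - (c * (cdot w u * cdot u w)) *: P.
    by rewrite mulmxBr mulmxBl -scalemxAr -scalemxAl /P proj3 scalerA.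
  rewrite /proj_meas -/P adjmxB adjmx1 /P adjmx_proj -/P h3.
  rewrite normCK -cdot_conj.
  set Y := E _; set Z := P *m rho *m P.
  rewrite mulrBr scalerBl.
  by rewrite addrA subrK addrAC.
rewrite eq1; apply: psdD; last by apply: psdE => //; exact: psd_conj.
apply: psdD; first exact: psd_conj.
apply: psdZ; last exact: psd_proj.
by apply: mulr_ge0 => //; rewrite subr_ge0.
Qed.

Lemma final (v w : 'cV[C]_n) rho (c : C) :
  psd (rho - c *: proj w) -> c * (cdot v w * cdot w v) <= cdot v (rho *m v).
Proof.
move=> h; have := h v.
have e : forall A B : 'M[C]_1, (A - c *: B) 0 0 = A 0 0 - c * B 0 0 by move=> A B; rewrite !mxE.
rewrite mulmxBr mulmxBl -scalemxAr -scalemxAl e proj_quad.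
by rewrite subr_ge0 /cdot mulmxA.
Qed.

End H.

Lemma bern (F : realFieldType) (t : F) k : 0 <= t -> t <= 1 -> 1 - k%:R * t <= (1 - t)^+k.
Proof.
move=> h0 h1; elim: k => [|k IH]; first by rewrite mul0r subr0 expr0.
rewrite exprSr -addn1 natrD.
set y := (1 - t) ^+ k in IH *.
have hk : 0 <= (k%:R : F) by [].
have h2 : 0 <= (y - (1 - k%:R * t)) * (1 - t) by apply: mulr_ge0; rewrite subr_ge0.
have h3 : 0 <= k%:R * t * t by rewrite mulr_ge0 // mulr_ge0.
nra.
Qed.

Theorem lemma1 (R : realType) (n : nat) (L' d p : R)
  (psi : R -> 'cV[R[i]]_n) :
  0 < L' ->
  (* normalized states *)
  (forall l, 0 <= l <= L' -> cdot (psi l) (psi l) = 1) ->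
  (* continuity of the path on [0, L'] *)
  (forall l0, 0 <= l0 <= L' -> forall e : R, 0 < e ->
     exists2 del : R, 0 < del & forall l, 0 <= l <= L' -> `|l - l0| < del ->
       sqnorm (psi l - psi l0) < cR e) ->
  0 <= d ->
  (forall l del, 0 <= l <= L' -> 0 <= l + del <= L' ->
     cR (1 - d ^+ 2 * del ^+ 2) <= `|cdot (psi l) (psi (l + del))| ^+ 2) ->
  0 < p < 1 ->
  let q := `|Num.ceil (L' ^+ 2 * d ^+ 2 / (1 - p))|%N in
  exists s : seq R,
    [/\ size s = q, sorted <%R (0 :: s), (q = 0%N \/ last 0 s = L') &
      forall Es : nat -> 'M[R[i]]_n -> 'M[R[i]]_n,
        (forall j, (j < q)%N -> quantum_operation (Es j)) ->
        let rho_out :=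
          foldl (fun rho j => proj_meas (psi (nth 0 s j)) (Es j) rho)
                (proj (psi 0)) (iota 0 q) in
        cR p <= cdot (psi L') (rho_out *m psi L')].

Proof.
move=> hL hnorm _ hd hov /andP[hp0 hp1] q.
set x := L' ^+ 2 * d ^+ 2 / (1 - p).
have hp1' : 0 < 1 - p by rewrite subr_gt0.
have hx0 : 0 <= x.
  by rewrite divr_ge0 ?mulr_ge0 ?sqr_ge0 // ltW.
have hqx : x <= q%:R.
  rewrite /q natr_absz -/x ger0_norm; first exact: ceil_ge.
  by rewrite ceil_ge0 (lt_le_trans _ hx0) // ltrN10.
have K : L' ^+ 2 * d ^+ 2 <= q%:R * (1 - p) by rewrite -ler_pdivrMr.
clearbody q.
have cRX : forall y k, cR y ^+ k = cR (y ^+ k) :> R[i].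
  by move=> y k; rewrite /cR !complexr0 rmorphXn.
have cRle : forall y z, (cR y <= cR z :> R[i]) = (y <= z).
  by move=> y z; rewrite /cR !complexr0 lecR.
have sq : forall v w : 'cV[R[i]]_n, cdot v w * cdot w v = `|cdot w v| ^+ 2.
  by move=> v w; rewrite normCK -cdot_conj mulrC.
have hL0 : 0 <= L' <= L' by rewrite lexx ltW.
have [hq0|hqpos] := posnP q.
  exists [::]; split => //; first by left.
  move=> Es _; rewrite hq0 /=.
  have := @final R n (psi L') (psi 0) (proj (psi 0)) 1.
  rewrite scale1r subrr mul1r sq => /(_ (@psd0 R n)).
  apply: le_trans.
  have h00 : (0:R) <= 0 <= L' by apply/andP; split; [exact: lexx | exact: ltW].
  have := hov 0 L' h00; rewrite add0r => /(_ hL0) h; apply: le_trans h.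
  rewrite cRle; move: K; rewrite hq0 mul0r mulrC => K; lra.
set Q : R := q%:R.
have hQ : 0 < Q by rewrite /Q ltr0n.
have hQn : Q != 0 by rewrite gt_eqF.
set t := d ^+ 2 * (L' / Q) ^+ 2.
have ht0 : 0 <= t by rewrite mulr_ge0 ?sqr_ge0.
have hQt : Q * t <= 1 - p.
  have -> : Q * t = L' ^+ 2 * d ^+ 2 / Q by rewrite /t; field.
  by rewrite ler_pdivrMr // [_ * Q]mulrC.
have hQ1 : 1 <= Q by rewrite /Q ler1n.
have ht1 : t <= 1 by nra.
set a := 1 - t.
have ha0 : 0 <= a by rewrite subr_ge0.
have hap : p <= a ^+ q by have := @bern R t q ht0 ht1; rewrite -/Q; lra.
pose pt := fun k : nat => k%:R * L' / Q.
have pt0 : pt 0 = 0 by rewrite /pt !mul0r.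
have ptq : pt q = L' by rewrite /pt -/Q mulrAC divff ?mul1r.
have ptS : forall k, pt k + L' / Q = pt k.+1.
  by move=> k; rewrite /pt -addn1 natrD !mulrDl mul1r.
have ptr : forall k, (k <= q)%N -> 0 <= pt k <= L'.
  move=> k hk; apply/andP; split; first by rewrite /pt divr_ge0 ?mulr_ge0 // ltW.
  by rewrite /pt ler_pdivrMr // mulrC ler_pM2l // /Q ler_nat.
pose s := mkseq (fun j => pt j.+1) q.
exists s; split.
- by rewrite size_mkseq.
- have -> : 0 :: s = map pt (iota 0 q.+1).
    rewrite /= pt0; congr (_ :: _).
    by rewrite /s /mkseq (iotaDl 1 0 q) -map_comp.
  rewrite sorted_map; apply: sub_sorted (iota_ltn_sorted 0 q.+1) => i j hij /=.
  by rewrite /pt ltr_pM2r ?invr_gt0 // ltr_pM2r // ltr_nat.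
- right; rewrite -nth_last size_mkseq nth_mkseq ?prednK //.
move=> Es HE /=.
have inv : forall k, (k <= q)%N ->
  @psd R n (foldl (fun rho j => proj_meas (psi (nth 0 s j)) (Es j) rho)
         (proj (psi 0)) (iota 0 k) - cR a ^+ k *: proj (psi (pt k))).
  elim=> [|k IH] hk.
    rewrite pt0 expr0 scale1r [foldl _ _ _]/= subrr; exact: psd0.
  have -> : iota 0 k.+1 = iota 0 k ++ [:: k] by rewrite -addn1 iotaD.
  rewrite foldl_cat [foldl _ _ [:: k]]/= [nth 0 s k]nth_mkseq // exprSr.
  apply: (@step R n _ (psi (pt k))).
  - exact: HE.
  - by apply: exprn_ge0; rewrite /cR complexr0 ler0c.
  - exact: IH (ltnW hk).
  - have h1 := ptr k (ltnW hk).
    have h2 : 0 <= pt k + L' / Q <= L' by rewrite ptS; exact: ptr.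
    by have := hov (pt k) (L' / Q) h1 h2; rewrite ptS.
have hf := @final R n (psi L') (psi (pt q)) _ _ (inv q (leqnn q)).
rewrite ptq hnorm // !mul1r in hf.
apply: (le_trans _ hf).
by rewrite cRX mulr1 cRle.
Qed.
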